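(* Let $\epsilon$ be a real number with $0 < \epsilon \leq 1$ and let $t$ be an integer such that every finite simple graph $G$ with $\Delta_\epsilon(G) \geq t$ satisfies $\chi(G) \leq \max\{\omega(G), \Delta_\epsilon(G)\}$. Then $t \geq 1 + \frac{2}{\epsilon}$.
   Context: For a graph $G$, $d(v)$ is the degree of $v$, $\chi(G)$ the chromatic number and $\omega(G)$ the clique number. For $0 \leq \epsilon \leq 1$, \[\Delta_\epsilon(G) = \left\lfloor \max_{xy \in E(G)} \Big( (1-\epsilon)\min\{d(x), d(y)\} + \epsilon \max\{d(x), d(y)\} \Big) \right\rfloor.\] *)

(* Defs.v *)
From HB Require Import structures.
From mathcomp Require Import all_boot all_order all_algebra.
From mathcomp Require Import reals.
Set Implicit Arguments. Unset Strict Implicit. Unset Printing Implicit Defensive.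
Import Order.TTheory GRing.Theory Num.Theory.

Section Graphs.
Variable T : finType.
Variable e : rel T.

Definition deg (v : T) : nat := #|[set y | e v y]|.

Definition colorable (k : nat) : bool :=
  [exists f : {ffun T -> 'I_k}, [forall x, forall y, e x y ==> (f x != f y)]].

(* chromatic number: least k such that G is k-colourable
   (#|T| colours always suffice, so #|T| is a valid default) *)
Definition chi : nat := \big[minn/#|T|]_(k < #|T|.+1 | colorable k) k.

Definition is_clique (A : {set T}) : bool :=
  [forall x in A, forall y in A, (x != y) ==> e x y].

Definition omega : nat := \max_(A : {set T} | is_clique A) #|A|.

Local Open Scope ring_scope.

Definition edge_val (R : realType) (eps : R) (x y : T) : R :=
  (1 - eps) * (minn (deg x) (deg y))%:R + eps * (maxn (deg x) (deg y))%:R.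

(* Delta_eps(G); convention: 0 if G has no edges *)
Definition Delta_eps (R : realType) (eps : R) : int :=
  Num.floor (\big[Num.max/0]_(x : T) \big[Num.max/0]_(y : T | e x y) edge_val eps x y).

End Graphs.

(* Main.v *)
Require Import Defs.
From HB Require Import structures.
From mathcomp Require Import all_boot all_order all_algebra.
From mathcomp Require Import reals.
From mathcomp Require Import zify ring lra.
Import Order.TTheory GRing.Theory Num.Theory.

Definition V (n : nat) := (bool + ('I_n.+1 + 'I_n.+2))%type.
Definition cc (n : nat) := (n.+2)./2.

Definition adj (n : nat) (x y : V n) : bool :=
  match x, y with
  | inl _, inl _ => false
  | inl _, inr (inl _) => true
  | inr (inl _), inl _ => true
  | inl b, inr (inr i) => (i < cc n) == b
  | inr (inr i), inl b => (i < cc n) == b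
  | inr (inl i), inr (inl j) => i != j
  | inr (inr i), inr (inr j) => i != j
  | _, _ => false
  end.

Lemma adj_sym n : symmetric (@adj n).
Proof. by move=> [x|[x|x]] [y|[y|y]] //=; rewrite eq_sym. Qed.

Lemma adj_irr n : irreflexive (@adj n).
Proof. by move=> [x|[x|x]] //=; rewrite eqxx. Qed.

Lemma cc_facts n : 0 < cc n /\ (cc n).*2 <= n.+2.
Proof.
rewrite /cc; split; first by rewrite half_gt0.
by rewrite -[X in _ <= X](odd_double_half n.+2) leq_addl.
Qed.

Lemma sum_neq m (j : 'I_m) : \sum_(i : 'I_m | j != i) 1 = m.-1.
Proof.
rewrite sum1dep_card.
have -> : [set i : 'I_m | j != i] = [set~ j] by apply/setP => i; rewrite !inE eq_sym.
by rewrite cardsC1 card_ord.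
Qed.

Lemma sum_lt m c : c <= m -> \sum_(i : 'I_m | i < c) 1 = c.
Proof.
move=> cm; rewrite -(big_ord_widen _ (fun _ => 1) cm).
by rewrite sum1_card card_ord.
Qed.

Lemma sum_nlt m c : c <= m -> \sum_(i : 'I_m | ~~ (i < c)) 1 = m - c.
Proof.
move=> cm; have H : \sum_(i < m) 1 = m by rewrite sum1_card card_ord.
rewrite (bigID (fun i : 'I_m => i < c)) /= sum_lt // in H; move: H; set s := \sum_(i < m | _) _ => H; lia.
Qed.

Lemma deg_sum n (x : V n) : deg (@adj n) x = \sum_(y | adj n x y) 1.
Proof. by rewrite /deg sum1dep_card. Qed.

Lemma deg_t n i : deg (@adj n) (inr (inl i)) = n.+2.
Proof.
rewrite deg_sum !big_sumType /=.
rewrite big_mkcond big_bool /= sum_neq big_pred0 //; lia.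
Qed.

Lemma deg_a n i : deg (@adj n) (inr (inr i)) = n.+2.
Proof.
rewrite deg_sum !big_sumType /=.
rewrite big_mkcond big_bool /= sum_neq big_pred0 //.
by case: (i < cc n).
Qed.

Lemma deg_h n b : deg (@adj n) (inl b) = n.+1 + (if b then cc n else n.+2 - cc n).
Proof.
have [c0 c2] := cc_facts n.
rewrite deg_sum !big_sumType /= big_pred0 // sum1_card card_ord.
case: b.
  rewrite (eq_bigl (fun i : 'I_n.+2 => i < cc n)); last by move=> i; rewrite eqb_id.
  by rewrite sum_lt //; lia.
rewrite (eq_bigl (fun i : 'I_n.+2 => ~~ (i < cc n))); last by move=> i; rewrite eqbF_neg.
by rewrite sum_nlt //; lia.
Qed.

Lemma onto_clique (T : finType) (e : rel T) j (f : T -> 'I_j) (B : {set T}) :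
  (forall x y, e x y -> f x != f y) ->
  (forall x y, x \in B -> y \in B -> x != y -> e x y) ->
  j <= #|B| -> forall c, exists2 x, x \in B & f x = c.
Proof.
move=> pf cl jB c.
have inj : {in B &, injective f}.
  move=> x y xB yB fxy; apply/eqP; apply/negPn/negP => nxy.
  by have := pf _ _ (cl _ _ xB yB nxy); rewrite fxy eqxx.
have eqB : f @: B = [set: 'I_j].
  apply/eqP; rewrite eqEcard subsetT cardsT card_ord (card_in_imset inj) jB //.
have : c \in f @: B by rewrite eqB inE.
by case/imsetP => x xB ->; exists x.
Qed.

Arguments onto_clique {T e j f} B.

Lemma not_col n j : j <= n.+2 -> ~~ colorable (@adj n) j.
Proof.
move=> jn; apply/negP => /existsP [f /forallP pf].
have pf' : forall x y, adj n x y -> f x != f y.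
  by move=> x y; have /forallP/(_ y)/implyP := pf x.
pose Ba : {set V n} := [set inr (inr i) | i : 'I_n.+2].
pose Bt : {set V n} := inl false |: [set inr (inl i) | i : 'I_n.+1].
have cBa : #|Ba| = n.+2.
  by rewrite card_imset ?card_ord // => i i' [].
have cBt : #|Bt| = n.+2.
  rewrite cardsU1 card_imset ?card_ord //; last by move=> i i' [].
  by rewrite /=; case: imsetP => // -[i _ //].
have clA : forall x y, x \in Ba -> y \in Ba -> x != y -> adj n x y.
  by move=> ? ? /imsetP [i _ ->] /imsetP [i' _ ->] /=; apply: contra => /eqP ->.
have [x xB fx] := onto_clique Ba pf' clA (leq_trans jn (eq_leq (esym cBa))) (f (inl false)).
move: xB => /imsetP [i _ xi]; subst x.
have hi : (i < cc n) = true.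
  case hn: (i < cc n) => //.
  by have := pf' (inr (inr i)) (inl false); rewrite /= hn fx => /(_ isT); rewrite eqxx.
have neq : f (inl true) != f (inl false).
  by rewrite -fx; apply: pf' => /=; rewrite hi.
have clT : forall x y, x \in Bt -> y \in Bt -> x != y -> adj n x y.
  move=> ? ? /setU1P [-> | /imsetP [i1 _ ->]] /setU1P [-> | /imsetP [i2 _ ->]] //=;
  by [rewrite eqxx | apply: contra => /eqP ->].
have [y yB fy] := onto_clique Bt pf' clT (leq_trans jn (eq_leq (esym cBt))) (f (inl true)).
move: yB => /setU1P [yf | /imsetP [i1 _ yi]]; subst y.
  by rewrite fy eqxx in neq.
by have := pf' (inl true) (inr (inl i1)) erefl; rewrite fy eqxx.
Qed.

Lemma chi_ge n : n.+2 < chi (@adj n).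
Proof.
rewrite /chi; apply: (big_ind (fun x => n.+2 < x)).
- by rewrite card_sum card_sum card_bool !card_ord; lia.
- by move=> x y hx hy; rewrite leq_min hx hy.
- move=> k ck; rewrite ltnNge; apply/negP => kle.
  by move: (not_col n k kle); rewrite ck.
Qed.

Definition g1 n (x : V n) : 'I_n.+2 :=
  match x with
  | inl _ => ord_max
  | inr (inl i) => widen_ord (leqnSn _) i
  | inr (inr i) => i
  end.

Definition g2 n (x : V n) : 'I_n.+2 :=
  match x with
  | inl _ => ord0
  | inr (inl i) => lift ord0 i
  | inr (inr i) => i
  end.

Lemma omega_le n : omega (@adj n) <= n.+2.
Proof.
have [c0 c2] := cc_facts n.
have c3 : n./2.+1 * 2 <= n.+2 by rewrite muln2.
apply/bigmax_leqP => A cl.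
have clA : forall x y, x \in A -> y \in A -> x != y -> adj n x y.
  move=> x y xA yA nxy.
  by move/forallP: cl => /(_ x) /implyP /(_ xA) /forallP /(_ y) /implyP /(_ yA) /implyP; apply.
suff [g inj] : exists g : V n -> 'I_n.+2, {in A &, injective g}.
  by rewrite -(card_in_imset inj) -[X in _ <= X](card_ord n.+2) max_card.
case hf: (inl false \in A).
- have ht : inl true \notin A.
    by apply/negP => ht; have := clA _ _ hf ht isT.
  exists (@g2 n) => x y xA yA gxy; apply/eqP; apply/negPn/negP => nxy.
  have := clA _ _ xA yA nxy; move: gxy.
  case: x xA {nxy} => [bx|[ix|ix]] xA; case: y yA => [bb|[iy|iy]] yA //=.
  + by move=> <-; case: bx xA => xA //; rewrite xA in ht.
  + by move=> /lift_inj ->; rewrite eqxx.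
  + by move=> ->; case: bb yA => yA //; rewrite yA in ht.
  + by move=> ->; rewrite eqxx.
- exists (@g1 n) => x y xA yA gxy; apply/eqP; apply/negPn/negP => nxy.
  have := clA _ _ xA yA nxy; move: gxy.
  case: x xA {nxy} => [bx|[ix|ix]] xA; case: y yA => [bb|[iy|iy]] yA //=.
  + by move=> /(congr1 val) /=; have := ltn_ord iy; lia.
  + move=> <-; case: bx xA => xA /=; last by rewrite xA in hf.
    rewrite eqb_id; lia.
  + by move=> /(congr1 val) /=; have := ltn_ord ix; lia.
  + by move=> /(congr1 val) /= /val_inj ->; rewrite eqxx.
  + move=> ->; case: bb yA => yA /=; last by rewrite yA in hf.
    rewrite eqb_id; lia.
  + by move=> ->; rewrite eqxx.
Qed.

Lemma deg_bounds n v : n.+2 <= deg (@adj n) v <= n.+2 + (n.+1 - cc n).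
Proof.
have [c0 c2] := cc_facts n.
rewrite -muln2 in c2.
case: v => [b|[i|i]]; rewrite ?deg_t ?deg_a ?deg_h; last 2 first.
- by rewrite leqnn leq_addr.
- by rewrite leqnn leq_addr.
case: b; lia.
Qed.

Lemma edge_low n x y : adj n x y -> deg (@adj n) x = n.+2 \/ deg (@adj n) y = n.+2.
Proof.
case: x => [b|[i|i]]; rewrite ?deg_t ?deg_a; try by left.
by case: y => [b'|[j|j]] //= _; right; rewrite ?deg_t ?deg_a.
Qed.

Local Open Scope ring_scope.

Lemma Delta_eq n (R : realType) (eps : R) : 0 <= eps ->
  eps * (n.+1 - cc n)%:R < 1 -> Delta_eps (@adj n) eps = (n.+2)%:Z.
Proof.
move=> e0 em.
have ev : forall x y, adj n x y ->
   (n.+2)%:R <= edge_val (@adj n) eps x y < (n.+2)%:R + 1.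
  move=> x y xy; rewrite /edge_val.
  have := deg_bounds n x; have := deg_bounds n y; have := edge_low n x y xy.
  set dx := deg _ x; set dy := deg _ y; set m := (n.+1 - cc n)%N.
  move=> hl hy hx.
  have -> : minn dx dy = n.+2 by case: hl => ->; lia.
  have hM1 : (n.+2 <= maxn dx dy)%N by lia.
  have hM2 : (maxn dx dy <= n.+2 + m)%N by lia.
  move: hM1 hM2; set M := maxn dx dy => hM1 hM2.
  have r1 : (n.+2)%:R <= M%:R :> R by rewrite ler_nat.
  have r2 : M%:R <= (n.+2)%:R + m%:R :> R by rewrite -natrD ler_nat.
  have p1 : eps * (n.+2)%:R <= eps * M%:R by rewrite ler_wpM2l.
  have p2 : eps * M%:R <= eps * (n.+2)%:R + eps * m%:R by rewrite -mulrDr ler_wpM2l.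
  apply/andP; split; lra.
apply/eqP; rewrite floor_eq intrD -pmulrn; apply/andP; split.
- have a01 : adj n (inr (inr ord0)) (inr (inr ord_max)) by [].
  apply: le_trans (le_bigmax _ _ (inr (inr ord0))).
  apply: le_trans (le_bigmax_cond _ _ a01).
  by case/andP: (ev _ _ a01).
  rewrite (_ : 1%:~R = 1 :> R) //.
  apply: (big_ind (fun x : R => x < (n.+2)%:R + 1)).
  + by have := ler0n R n.+2; lra.
  + by move=> a b ha hb'; rewrite gt_max ha hb'.
  + move=> x _; apply: (big_ind (fun x : R => x < (n.+2)%:R + 1)).
    * by have := ler0n R n.+2; lra.
    * by move=> a b ha hb'; rewrite gt_max ha hb'.
    * by move=> y xy; case/andP: (ev _ _ xy).
Qed.

Lemma cc_ge n : (n.+1 <= cc n * 2)%N.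
Proof.
have := odd_double_half n.+2; rewrite /cc -muln2.
by case: (odd n.+2) => /= h; lia.
Qed.

Theorem mainTheorem6 (R : realType) (eps : R) (t : int) :
  0 < eps -> eps <= 1 ->
  (forall (T : finType) (e : rel T), symmetric e -> irreflexive e ->
     t <= Delta_eps e eps ->
     ((chi e)%:Z <= Num.max (omega e)%:Z (Delta_eps e eps))) ->
  1 + 2 / eps <= t%:~R.
Proof.
move=> e0 e1 H; rewrite leNgt; apply/negP => ht.
suff [n [hn hm]] : exists n, t <= (n.+2)%:Z /\ eps * (n.+1 - cc n)%:R < 1.
  have := H _ _ (@adj_sym n) (@adj_irr n).
  rewrite Delta_eq ?(ltW e0) // => /(_ hn).
  have := chi_ge n; have := omega_le n.
  set c := chi _; set o := omega _ => ho hc.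
  move=> h; have e : Num.max (o%:Z) (n.+2)%:Z = (n.+2)%:Z by apply/max_idPr; rewrite lez_nat.
  by move: h; rewrite e lez_nat; lia.
case: (lerP t 2) => t2.
  exists 0%N; split; first by apply: le_trans t2 _.
  by rewrite /cc /= mulr0.
have [n tn] : exists n : nat, t = (n.+2)%:Z.
  clear H ht; move: t2; case: t => [m|m] //; rewrite ltz_nat => m2.
  by exists (m - 2)%N; congr Posz; lia.
subst t; exists n; split => //.
have := cc_ge n; set m := (n.+1 - cc n)%N => hc.
have hm : (m * 2 <= n.+1)%N by rewrite /m; lia.
have rm : m%:R * 2 <= (n.+1)%:R :> R by rewrite -(natrM R m 2) ler_nat.
move: ht; rewrite -pmulrn => ht.
have h1 : (n.+1)%:R < 2 / eps :> R by move: ht; rewrite -addn1 natrD; lra.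
have h2 : eps * (n.+1)%:R < eps * (2 / eps) by rewrite ltr_pM2l.
rewrite mulrCA mulfV ?mulr1 in h2; last by rewrite lt0r_neq0.
have p : eps * (m%:R * 2) <= eps * (n.+1)%:R by rewrite ler_wpM2l // ltW.
lra.
Qed.
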